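(* Let $R$ be a commutative ring with identity that is not an integral domain. If $\gamma_t(\Gamma(R))<\infty$ and $R$ is not isomorphic to $\mathbb{Z}_2\times D$ for any integral domain $D$, then $\gamma_t(\Gamma(R))=\gamma(\Gamma(R))$.
   Context: All rings are commutative with identity. The zero-divisor graph $\Gamma(R)$ has vertex set $Z(R)^*$ (nonzero zero-divisors); distinct $r,s$ are adjacent iff $rs=0$, and $x$ is adjacent to itself iff $x^2=0$. A dominating set is $X\subseteq Z(R)^*$ such that every vertex not in $X$ is adjacent to some element of $X$; a total dominating set is $X$ such that every vertex (including those in $X$) is adjacent to some element of $X$ (self-adjacency counts). $\gamma,\gamma_t$ are the respective minimum cardinalities. *)

(* Defs.v *)
From HB Require Import structures.
From mathcomp Require Import all_boot all_order all_algebra.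
Set Implicit Arguments. Unset Strict Implicit. Unset Printing Implicit Defensive.
Import GRing.Theory.
Local Open Scope ring_scope.

(* Z(R)^* : nonzero zero-divisors, the vertex set of Gamma(R). *)
Definition zd_star (R : comNzRingType) (x : R) : Prop :=
  x != 0 /\ exists y : R, y != 0 /\ x * y = 0.

(* adjacency in Gamma(R): distinct r,s adjacent iff rs = 0; x adjacent to
   itself iff x^2 = 0.  In both cases: x * y = 0. *)
Definition zd_adj (R : comNzRingType) (x y : R) : Prop := x * y = 0.

(* finite vertex subsets are represented by duplicate-free sequences;
   cardinality = size *)
Definition vertex_subset (R : comNzRingType) (X : seq R) : Prop :=
  uniq X /\ forall x, x \in X -> zd_star x.

Definition dominating (R : comNzRingType) (X : seq R) : Prop :=
  vertex_subset X /\
  forall v : R, zd_star v -> v \notin X -> exists2 x, x \in X & zd_adj v x.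

Definition total_dominating (R : comNzRingType) (X : seq R) : Prop :=
  vertex_subset X /\
  forall v : R, zd_star v -> exists2 x, x \in X & zd_adj v x.

(* gamma(Gamma(R)) = n  (minimum over finite dominating sets; this is the
   true minimum whenever some finite dominating set exists) *)
Definition is_domination_number (R : comNzRingType) (n : nat) : Prop :=
  (exists X : seq R, dominating X /\ size X = n) /\
  forall X : seq R, dominating X -> (n <= size X)%N.

Definition is_total_domination_number (R : comNzRingType) (n : nat) : Prop :=
  (exists X : seq R, total_dominating X /\ size X = n) /\
  forall X : seq R, total_dominating X -> (n <= size X)%N.

Definition total_domination_finite (R : comNzRingType) : Prop :=
  exists X : seq R, total_dominating X.

Definition is_integral_domain (R : comNzRingType) : Prop :=
  forall a b : R, a * b = 0 -> a = 0 \/ b = 0.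

Definition ring_iso (R S : comNzRingType) : Prop :=
  exists f : {rmorphism R -> S}, bijective f.

(* Main.v *)
Require Import Defs.
From HB Require Import structures.
From mathcomp Require Import all_boot all_order all_algebra.
From mathcomp Require Import ring.
From Stdlib Require Import Classical ClassicalEpsilon.
Set Implicit Arguments. Unset Strict Implicit. Unset Printing Implicit Defensive.
Import GRing.Theory.
Local Open Scope ring_scope.
Record idem (R : comNzRingType) := Idem {
  ie : R;
  ie_idem : ie * ie = ie;
  ie_neq1 : ie != 1;
  ie_dom : forall b c : R, b * ie = 0 -> c * ie = 0 -> b * c = 0 -> b = 0 \/ c = 0;
  ie_two : forall r : R, ie * r = 0 \/ ie * r = ie;
  ie_neq0 : ie != 0 }.

Record Dt (R : comNzRingType) (i : idem R) := MkD { dval : R; dvalP : dval * ie i == 0 }.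

HB.instance Definition _ R i := [isSub for @dval R i].
HB.instance Definition _ R i := [Choice of @Dt R i by <:].

Section DS.
Variables (R : comNzRingType) (i : idem R).
Local Notation e := (ie i).
Local Notation D := (@Dt R i).

Lemma D0P : (0 : R) * e == 0. Proof. by rewrite mul0r. Qed.
Lemma DaddP (a b : D) : (dval a + dval b) * e == 0.
Proof. by rewrite mulrDl (eqP (dvalP a)) (eqP (dvalP b)) addr0. Qed.
Lemma DoppP (a : D) : (- dval a) * e == 0.
Proof. by rewrite mulNr (eqP (dvalP a)) oppr0. Qed.
Lemma DmulP (a b : D) : (dval a * dval b) * e == 0.
Proof. by rewrite -mulrA (eqP (dvalP b)) mulr0. Qed.
Lemma D1P : (1 - e) * e == 0.
Proof. by rewrite mulrBl mul1r ie_idem subrr. Qed.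

Definition Dzero : D := MkD D0P.
Definition Dadd (a b : D) : D := MkD (DaddP a b).
Definition Dopp (a : D) : D := MkD (DoppP a).
Definition Dmul (a b : D) : D := MkD (DmulP a b).
Definition Done : D := MkD D1P.

Lemma Dadd_assoc : associative Dadd.
Proof. by move=> a b c; apply: val_inj; rewrite /= addrA. Qed.
Lemma Dadd_comm : commutative Dadd.
Proof. by move=> a b; apply: val_inj; rewrite /= addrC. Qed.
Lemma Dadd0 : left_id Dzero Dadd.
Proof. by move=> a; apply: val_inj; rewrite /= add0r. Qed.
Lemma DaddN : left_inverse Dzero Dopp Dadd.
Proof. by move=> a; apply: val_inj; rewrite /= addNr. Qed.
End DS.

HB.instance Definition _ R i := GRing.isZmodule.Build (@Dt R i)
  (@Dadd_assoc R i) (@Dadd_comm R i) (@Dadd0 R i) (@DaddN R i).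

Section DS2.
Variables (R : comNzRingType) (i : idem R).
Local Notation e := (ie i).
Local Notation D := (@Dt R i).
Lemma Dmul_assoc : associative (@Dmul R i).
Proof. by move=> a b c; apply: val_inj; rewrite /= mulrA. Qed.
Lemma Dmul_comm : commutative (@Dmul R i).
Proof. by move=> a b; apply: val_inj; rewrite /= mulrC. Qed.
Lemma Dmul1 : left_id (Done i) (@Dmul R i).
Proof. by move=> a; apply: val_inj; rewrite /= mulrBl mul1r mulrC (eqP (dvalP a)) subr0. Qed.
Lemma DmulDl : left_distributive (@Dmul R i) +%R.
Proof. by move=> a b c; apply: val_inj; rewrite /= mulrDl. Qed.
Lemma Done_neq0 : Done i != 0.
Proof. apply/eqP => /(congr1 val) /= /eqP; rewrite subr_eq0 eq_sym; apply/negP; exact: ie_neq1. Qed.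
End DS2.

HB.instance Definition _ R i := GRing.Zmodule_isComNzRing.Build (@Dt R i)
  (@Dmul_assoc R i) (@Dmul_comm R i) (@Dmul1 R i) (@DmulDl R i) (@Done_neq0 R i).


Section DS3.
Variables (R : comNzRingType) (i : idem R).
Local Notation D := (@Dt R i).
Definition Dunit (x : D) : bool :=
  if excluded_middle_informative (exists y : D, y * x = 1) then true else false.
Definition Dinv (x : D) : D :=
  match excluded_middle_informative (exists y : D, y * x = 1) with
  | left H => proj1_sig (constructive_indefinite_description _ H)
  | right _ => x end.
Lemma DmulVx : {in Dunit, left_inverse 1 Dinv *%R}.
Proof.
move=> x; rewrite /Dunit /Dinv /in_mem /=; case: excluded_middle_informative => // H _.
by case: constructive_indefinite_description.
Qed.
Lemma DunitPl (x y : D) : y * x = 1 -> Dunit x.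
Proof. by move=> H; rewrite /Dunit; case: excluded_middle_informative => // -[]; exists y. Qed.
Lemma Dinvr_out : {in [predC Dunit], Dinv =1 id}.
Proof. move=> x; rewrite inE /Dunit /Dinv /in_mem /=; by case: excluded_middle_informative. Qed.
End DS3.

HB.instance Definition _ R i := GRing.ComNzRing_hasMulInverse.Build (@Dt R i)
  (@DmulVx R i) (@DunitPl R i) (@Dinvr_out R i).

Lemma Dintegral R i : GRing.integral_domain_axiom (@Dt R i).
Proof.
move=> x y /(congr1 val) /= H.
have [Hx|Hy] := ie_dom (eqP (dvalP x)) (eqP (dvalP y)) H.
  by apply/orP; left; apply/eqP; apply: val_inj.
by apply/orP; right; apply/eqP; apply: val_inj.
Qed.

HB.instance Definition _ R i := GRing.ComUnitRing_isIntegral.Build (@Dt R i) (@Dintegral R i).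

Section Iso.
Variables (R : comNzRingType) (i : idem R).
Local Notation e := (ie i).
Local Notation D := (@Dt R i).
Lemma phiP (r : R) : (r - e * r) * e == 0.
Proof.
apply/eqP; have -> : (r - e * r) * e = r * e - (e * e) * r by ring.
by rewrite ie_idem mulrC subrr.
Qed.
Definition phi (r : R) : 'Z_2 * D := ((if e * r == 0 then 0 else 1), MkD (phiP r)).
Definition psi (p : 'Z_2 * D) : R := (if p.1 == 0 then 0 else e) + dval p.2.

Lemma Z2_cases (a : 'Z_2) : a = 0 \/ a = 1.
Proof. by case: a => [[|[|]]] // H; [left|right]; apply: val_inj. Qed.

Lemma phi_zmod : zmod_morphism phi.
Proof.
move=> x y; rewrite /phi; congr (_, _) => /=.
  rewrite mulrBr.
  have e0 := ie_neq0 i.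
  case: (ie_two i x) => ->; case: (ie_two i y) => ->;
    rewrite ?subrr ?subr0 ?sub0r ?oppr_eq0 ?eqxx ?(negbTE e0). all: try done; try by apply: val_inj.
apply: val_inj => /=; ring.
Qed.

Lemma phi_monoid : monoid_morphism phi.
Proof.
split.
  rewrite /phi; congr (_, _) => /=; first by rewrite mulr1 (negbTE (ie_neq0 i)).
  by apply: val_inj => /=; rewrite mulr1.
move=> x y; rewrite /phi; congr (_, _) => /=.
  have -> : e * (x * y) = (e * x) * (e * y).
    by rewrite mulrACA ie_idem mulrA.
  have e0 := ie_neq0 i.
  case: (ie_two i x) => ->; case: (ie_two i y) => ->;
    rewrite ?mul0r ?mulr0 ?ie_idem ?eqxx ?(negbTE e0); try done; try by apply: val_inj.
apply: val_inj => /=.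
have -> : (x - e * x) * (y - e * y) = x * y - e * (x * y) - e * (x * y) + (e * e) * (x * y) by ring.
rewrite ie_idem; ring.
Qed.

HB.instance Definition _ := GRing.isZmodMorphism.Build R ('Z_2 * D)%type phi phi_zmod.
HB.instance Definition _ := GRing.isMonoidMorphism.Build R ('Z_2 * D)%type phi phi_monoid.

Lemma phi_bij : bijective phi.
Proof.
exists psi.
  move=> r; rewrite /psi /phi /=.
  case: (ie_two i r) => ->; rewrite ?eqxx ?(negbTE (ie_neq0 i)) /=.
    by rewrite add0r subr0.
  by rewrite addrC subrK.
move=> [a d]; rewrite /psi /phi /=.
have de : dval d * e = 0 := eqP (dvalP d).
have Hed : e * dval d = 0 by rewrite mulrC.
case: (Z2_cases a) => ->; congr (_, _) => /=.
- by rewrite mulrDr Hed addr0 mulr0 eqxx.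
- by apply: val_inj => /=; rewrite add0r Hed subr0.
- have H1 : ((1 : 'Z_2) == 0) = false by [].
  by rewrite mulrDr Hed addr0 ie_idem (negbTE (ie_neq0 i)).
- apply: val_inj => /=.
  have H1 : ((1 : 'Z_2) == 0) = false by [].
  rewrite mulrDr Hed addr0 ie_idem; ring.
Qed.

Lemma iso_Z2 : ring_iso R ('Z_2 * D)%type.
Proof. by exists phi; exact: phi_bij. Qed.
End Iso.

Lemma count_le_in (T : eqType) (a b : pred T) (s : seq T) :
  (forall z, z \in s -> a z -> b z) -> (count a s <= count b s)%N.
Proof.
elim: s => [|y s IH] Hab //=.
apply: leq_add; last by apply: IH => z zs; apply: Hab; rewrite inE zs orbT.
case ay: (a y) => //; by rewrite (Hab y (mem_head _ _) ay).
Qed.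

Lemma count_lt (T : eqType) (a b : pred T) (s : seq T) :
  (forall z, z \in s -> a z -> b z) -> (exists2 z, z \in s & b z && ~~ a z) ->
  (count a s < count b s)%N.
Proof.
elim: s => [|y s IH] Hab [z]; first by [].
have Hab' : forall z, z \in s -> a z -> b z by move=> w ws; apply: Hab; rewrite inE ws orbT.
rewrite inE => /orP [/eqP -> | zs] /andP [bz naz] /=.
  by rewrite (negbTE naz) bz add0n add1n ltnS; apply: count_le_in.
have := IH Hab' (ex_intro2 _ _ z zs (introT andP (conj bz naz))).
have : (a y <= b y)%N by case ay: (a y) => //; rewrite (Hab y (mem_head _ _) ay).
move=> H1 H2; rewrite -addnS; exact: leq_add H1 H2.
Qed.

Section Main.
Variable R : comNzRingType.

Definition pdom (L : seq R) :=
  (forall x, x \in L -> zd_star x) /\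
  (forall t, zd_star t -> t \notin L -> exists2 x, x \in L & t * x = 0).
Definition niso (L : seq R) (x : R) := exists2 u, u \in L & x * u = 0.
Definition nb (L : seq R) (x : R) : bool :=
  if excluded_middle_informative (niso L x) then true else false.
Lemma nbP L x : reflect (niso L x) (nb L x).
Proof. by rewrite /nb; case: excluded_middle_informative => H; constructor. Qed.
Definition mu (L : seq R) := count (fun x => ~~ nb L x) L.

Lemma Mstep L (a : R -> R) v z0 :
  pdom L -> (forall z, z \in L -> z * a z != 0) ->
  (forall t, t \in L -> ~ niso L t -> t * a t = t \/ exists2 z, z \in L & t * (z * a z) = 0) ->
  v \in L -> ~ niso L v -> z0 \in L -> v * (z0 * a z0) = 0 ->
  pdom [seq z * a z | z <- L] /\ (mu [seq z * a z | z <- L]%R < mu L)%N.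
Proof.
move=> [HV HD] Hnz Hiso vL nv z0L Hv0.
set L' := map _ L.
have Hmul : forall t z : R, t * z = 0 -> t * (z * a z) = 0 by move=> t z H; rewrite mulrA H mul0r.
have Hin : forall z, z \in L -> z * a z \in L' by move=> z zL; apply: (map_f (fun z => z * a z)).
split; first split.
- move=> x /mapP [z zL ->]; have [_ [y [y0 zy]]] := HV z zL; split; first exact: Hnz.
  by exists y; split => //; rewrite mulrAC zy mul0r.
- move=> t Ht tL'.
  have [tL|tL] := boolP (t \in L).
  + have [[u uL tu]|nt] := classic (niso L t).
      by exists (u * a u); [exact: Hin | exact: Hmul].
    have [E|[z zL tz]] := Hiso t tL nt.
      by have := Hin t tL; rewrite E (negbTE tL').
    by exists (z * a z); [exact: Hin|].
  + have [x xL tx] := HD t Ht tL.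
    by exists (x * a x); [exact: Hin | exact: Hmul].
- rewrite /mu count_map; apply: count_lt.
  + move=> z zL /=; apply: contra => /nbP [u uL zu]; apply/nbP.
    by exists (u * a u); [exact: Hin | rewrite mulrACA zu mul0r].
  + exists v => //; apply/andP; split; first by apply/negP => /nbP.
    rewrite /= negbK; apply/nbP; exists (z0 * a z0); first exact: Hin.
    by rewrite mulrAC Hv0 mul0r.
Qed.

Lemma Astep L v y :
  pdom L -> v \in L -> ~ niso L v -> y != 0 -> v * y = 0 ->
  (forall t, zd_star t -> t \notin L -> t * v = 0 ->
     exists2 u, u \in L & (u != v) && (t * u == 0)) ->
  pdom [seq (if z == v then y else z) | z <- L] /\
  (mu [seq (if z == v then y else z) | z <- L]%R < mu L)%N.
Proof.
move=> [HV HD] vL nv y0 vy Hp.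
set f := fun z => if z == v then y else z.
set L' := map f L.
have yL : y \notin L by apply/negP => yL; apply: nv; exists y.
have yv : zd_star y.
  split => //; exists v; split; [exact: (HV v vL).1 | by rewrite mulrC].
have yv0 : y * v = 0 by rewrite mulrC.
have [u uL /andP [uv /eqP yu]] := Hp y yv yL yv0.
have Hin z : z \in L -> f z \in L' by apply: map_f.
have fz z : z != v -> f z = z by rewrite /f => /negbTE ->.
have fv : f v = y by rewrite /f eqxx.
split; first split.
- move=> x /mapP [z zL ->]; rewrite /f; case: eqP => _; [exact: yv | exact: HV].
- move=> t Ht tL'.
  have [tL|tL] := boolP (t \in L).
  + case: (eqVneq t v) => [tv | tv].
      by exists y; [rewrite -fv; exact: Hin | rewrite tv].
    by have := Hin t tL; rewrite fz // (negbTE tL').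
  + have [x xL tx] := HD t Ht tL.
    case: (eqVneq x v) => [xv | xv].
      subst x; have [u' u'L /andP [u'v /eqP tu']] := Hp t Ht tL tx.
      by exists u' => //; have := Hin u' u'L; rewrite fz.
    by exists x => //; have := Hin x xL; rewrite fz.
- rewrite /mu count_map; apply: count_lt.
  + move=> z zL /=; apply: contra => /nbP [w wL zw]; apply/nbP.
    case: (eqVneq z v) => [zv|zv].
      by subst z; exfalso; apply: nv; exists w.
    rewrite fz //; exists w => //.
    case: (eqVneq w v) => [wv|wv].
      by subst w; exfalso; apply: nv; exists z => //; rewrite mulrC.
    by have := Hin w wL; rewrite fz.
  + exists v => //; apply/andP; split; first by apply/negP => /nbP.
    rewrite /= negbK fv; apply/nbP; exists u => //.
    by have := Hin u uL; rewrite fz.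
Qed.

Lemma done_case L : pdom L -> (forall x, x \in L -> niso L x) ->
  exists T : seq R, total_dominating T /\ (size T <= size L)%N.
Proof.
move=> [HV HD] Hn; exists (undup L); split; last exact: size_undup.
split; first by split; [exact: undup_uniq | move=> x; rewrite mem_undup; exact: HV].
move=> v Hv; have [vL|vL] := boolP (v \in L).
  by have [u uL vu] := Hn v vL; exists u; rewrite ?mem_undup.
by have [u uL vu] := HD v Hv vL; exists u; rewrite ?mem_undup.
Qed.

Definition privfree (L : seq R) (v : R) := forall t, zd_star t -> t \notin L -> t * v = 0 ->
  exists2 u, u \in L & (u != v) && (t * u == 0).

Lemma priv_exists (L : seq R) (v : R) : ~ privfree L v ->
  exists p, [/\ p != 0, p \notin L, p * v = 0 & forall u, u \in L -> u != v -> p * u != 0].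
Proof.
move=> H; apply: NNPP => H'; apply: H => t Ht tL tv; apply: NNPP => H2; apply: H'.
exists t; split => //; first exact: Ht.1.
move=> u uL uv; apply/negP => /eqP tu; apply: H2; exists u => //; by rewrite uv tu eqxx.
Qed.

Hypothesis Hno : forall D : idomainType, ~ ring_iso R ('Z_2 * D)%type.

Lemma reduce L v : pdom L -> v \in L -> ~ niso L v ->
  exists L', [/\ pdom L', size L' = size L & (mu L' < mu L)%N].
Proof.
move=> HL vL nv.
have Hv := HL.1 v vL.
have AS : forall w, w \in L -> ~ niso L w -> privfree L w ->
    exists L', [/\ pdom L', size L' = size L & (mu L' < mu L)%N].
  move=> w wL nw Hp; have [w0 [y [y0 wy]]] := HL.1 w wL.
  have [H1 H2] := Astep HL wL nw y0 wy Hp.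
  by eexists; split; [exact: H1 | rewrite size_map | exact: H2].
have MS : forall (a : R -> R) z0, (forall z, z \in L -> z * a z != 0) ->
  (forall t, t \in L -> ~ niso L t -> t * a t = t \/ exists2 z, z \in L & t * (z * a z) = 0) ->
  z0 \in L -> v * (z0 * a z0) = 0 ->
    exists L', [/\ pdom L', size L' = size L & (mu L' < mu L)%N].
  move=> a z0 H1 H2 H3 H4; have [K1 K2] := Mstep HL H1 H2 vL nv H3 H4.
  by eexists; split; [exact: K1 | rewrite size_map | exact: K2].
case: (classic (privfree L v)) => [Hp|Hnp]; first exact: AS v vL nv Hp.
have [p [p0 pL pv Hpu]] := priv_exists Hnp.
have vp : v * p = 0 by rewrite mulrC.
case: (classic (exists2 w, w \in L & niso L w)) => [[w wL nw]|Hall].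
  have wv : w != v by apply/eqP => E; subst w.
  apply: (MS (fun z => if z == w then p else 1) w).
  - move=> z zL /=; case: (eqVneq z w) => [->|zw]; first by rewrite mulrC; exact: Hpu.
    by rewrite ?(negbTE zw) mulr1; exact: (HL.1 z zL).1.
  - move=> t tL nt /=; left; case: (eqVneq t w) => [E|tw]; last by rewrite ?(negbTE tw) mulr1.
    by subst t.
  - exact: wL.
  - by rewrite /= eqxx mulrCA vp mulr0.
have nall : forall w, w \in L -> ~ niso L w by move=> w wL nw; apply: Hall; exists w.
case: (classic (exists2 w, w \in L & w != v)) => [[w wL wv]|Hone].
  case: (classic (privfree L w)) => [Hpw|Hnpw]; first exact: AS w wL (nall w wL) Hpw.
  have [q [q0 qL qw Hqu]] := priv_exists Hnpw.
  have vw : v != w by rewrite eq_sym.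
  apply: (MS (fun z => if z == v then q else if z == w then p else 1) w).
  - move=> z zL /=; case: (eqVneq z v) => [->|zv]; first by rewrite ?eqxx mulrC; exact: Hqu.
    rewrite ?(negbTE zv); case: (eqVneq z w) => [->|zw]; first by rewrite ?eqxx mulrC; exact: Hpu.
    by rewrite ?(negbTE zw) mulr1; exact: (HL.1 z zL).1.
  - move=> t tL nt /=; case: (eqVneq t v) => [->|tv].
      by right; exists w => //; rewrite (negbTE wv) eqxx mulrCA vp mulr0.
    rewrite ?(negbTE tv); case: (eqVneq t w) => [->|tw]; last by left; rewrite ?(negbTE tw) mulr1.
    by right; exists v => //; rewrite ?eqxx mulrCA (mulrC w q) qw mulr0.
  - exact: wL.
  - by rewrite /= (negbTE wv) eqxx mulrCA vp mulr0.
have allv : forall z, z \in L -> z = v.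
  by move=> z zL; apply/eqP; apply: NNPP => H; apply: Hone; exists z => //; apply/negP.
case: (classic (exists r, v * v * r = 0 /\ v * r != 0)) => [[r [r1 r2]]|Hnr].
  apply: (MS (fun _ => r) v).
  - by move=> z zL; rewrite (allv z zL).
  - by move=> t tL nt; right; exists v => //; rewrite (allv t tL) mulrA.
  - exact: vL.
  - by rewrite mulrA.
exfalso.
have Hann : forall r, v * v * r = 0 -> v * r = 0.
  move=> r H; apply/eqP; apply: NNPP => H'; apply: Hnr; exists r; split => //; exact/negP.
have Dom : forall t y, t != 0 -> y != 0 -> t * y = 0 -> t != v -> t * v = 0.
  move=> t y t0 y0 ty tv.
  have tL : t \notin L by apply/negP => /allv E; rewrite E eqxx in tv.
  have [x xL tx] := HL.2 t (conj t0 (ex_intro _ y (conj y0 ty))) tL.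
  by rewrite -(allv x xL).
have v0 : v != 0 := Hv.1.
have vv : v * v != 0 by apply/negP => /eqP H; apply: nv; exists v.
have idm : v * v = v.
  case: (eqVneq (v * v) v) => // Hne; exfalso.
  have H0 : v * v * v = 0 by apply: (Dom _ p vv p0 _ Hne); rewrite -mulrA vp mulr0.
  by rewrite (Hann v H0) eqxx in vv.
have two : forall r, v * r = 0 \/ v * r = v.
  move=> r; case: (eqVneq (v * r) 0) => [->|r0]; first by left.
  case: (eqVneq (v * r) v) => [->|rv]; first by right.
  exfalso.
  have H0 : v * v * r = 0.
    rewrite -mulrA (mulrC v r) mulrA; apply: (Dom _ p r0 p0 _ rv).
    by rewrite mulrAC vp mul0r.
  by rewrite (Hann r H0) eqxx in r0.
have n1 : v != 1 by apply/eqP => E; move: pv; rewrite E mulr1 => /eqP; rewrite (negbTE p0).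
have dm : forall b c : R, b * v = 0 -> c * v = 0 -> b * c = 0 -> b = 0 \/ c = 0.
  move=> b c bv cv bc; case: (eqVneq b 0) => [->|b0]; first by left.
  case: (eqVneq c 0) => [->|c0]; first by right.
  exfalso.
  have t0 : b + v != 0.
    apply/eqP => E; move: bv; rewrite (_ : b = - v); last by apply/eqP; rewrite -addr_eq0 E.
    by rewrite mulNr idm => /eqP; rewrite oppr_eq0 (negbTE v0).
  have tv : b + v != v by rewrite -subr_eq0 addrK.
  have := Dom _ c t0 c0 _ tv; rewrite mulrDl bc add0r mulrC cv => /(_ erefl).
  by rewrite mulrDl bv idm add0r; apply/eqP.
exact: (Hno (iso_Z2 (Idem idm n1 dm two v0))).
Qed.

Lemma main L : pdom L -> exists T : seq R, total_dominating T /\ (size T <= size L)%N.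
Proof.
move=> HL; move: {2}(mu L) (leqnn (mu L)) => k; elim: k L HL => [|k IH] L HL Hk;
  (case: (classic (forall x, x \in L -> niso L x)) => [Hall|Hn]; first exact: done_case);
  have [v vL nv] : exists2 v, v \in L & ~ niso L v by
    apply: NNPP => H; apply: Hn => x xL; apply: NNPP => H'; apply: H; exists x.
  have : (0 < mu L)%N.
    by rewrite /mu -has_count; apply/hasP; exists v => //; apply/negP => /nbP.
  by rewrite leqNgt in Hk; rewrite (negbTE Hk).
have [L' [HL' sz lt]] := reduce HL vL nv.
have [T [HT sT]] := IH L' HL' (leq_trans lt Hk : (mu L' < k.+1)%N).
by exists T; rewrite -sz.
Qed.

End Main.

Local Close Scope ring_scope.

Theorem theorem4p3 (R : comNzRingType) :
  ~ is_integral_domain R ->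
  total_domination_finite R ->
  (forall D : idomainType, ~ ring_iso R ('Z_2 * D)%type) ->
  forall n : nat, is_total_domination_number R n -> is_domination_number R n.
Proof.
move=> _ _ Hno n [[X [HX sX]] Hmin]; split.
  exists X; split => //; split; first exact: HX.1.
  by move=> v Hv _; exact: HX.2 v Hv.
move=> Y [[Yu YV] YD].
have [T [HT sT]] := @main R Hno Y (conj YV YD).
exact: leq_trans (Hmin T HT) sT.
Qed.
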